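(* Let $\mathcal{X}$ be a symmetric configuration $v_3$ with strong chromatic number 5, and suppose there is a set $T$ of at most 2 points of $\mathcal{X}$ and an assignment of 4 colours to the points not in $T$ such that no two points not in $T$ lying in a common block receive the same colour. Then $\mathcal{X}$ has weak chromatic number 2 (equivalently, $\mathcal{X}$ has a blocking set).
   Context: A symmetric configuration $v_3$ consists of a set of $v$ points and a collection of $v$ blocks, each block being a 3-element subset of the points, such that every point lies in exactly 3 blocks and any two distinct points lie in at most one common block. A strong colouring is an assignment of colours to points such that the three points of every block receive three distinct colours; the strong chromatic number is the minimum number of colours in a strong colouring. A weak colouring is an assignment of colours to points such that no block is monochromatic; the weak chromatic number is the minimum number of colours in a weak colouring. A blocking set is a subset $Q$ of the points such that every block contains at least one point of $Q$ and at least one point not in $Q$. *)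

(* Defs.v *)
From mathcomp Require Import all_boot.
Set Implicit Arguments. Unset Strict Implicit. Unset Printing Implicit Defensive.

Definition sym_config_v3 (P B : finType) (blk : B -> {set P}) : Prop :=
  [/\ #|P| = #|B|,
      (forall b, #|blk b| = 3),
      (forall x : P, #|[set b | x \in blk b]| = 3)
    & (forall x y : P, x != y -> #|[set b | (x \in blk b) && (y \in blk b)]| <= 1)].

Definition strong_colouring (P B : finType) (blk : B -> {set P}) (k : nat)
  (c : P -> 'I_k) : Prop :=
  forall b x y, x \in blk b -> y \in blk b -> x != y -> c x != c y.

Definition strong_chromatic_number (P B : finType) (blk : B -> {set P}) (n : nat) : Prop :=
  (exists c : P -> 'I_n, strong_colouring blk c) /\
  (forall k, k < n -> ~ exists c : P -> 'I_k, strong_colouring blk c).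

Definition weak_colouring (P B : finType) (blk : B -> {set P}) (k : nat)
  (c : P -> 'I_k) : Prop :=
  forall b, exists x, exists y, [/\ x \in blk b, y \in blk b & c x != c y].

Definition weak_chromatic_number (P B : finType) (blk : B -> {set P}) (n : nat) : Prop :=
  (exists c : P -> 'I_n, weak_colouring blk c) /\
  (forall k, k < n -> ~ exists c : P -> 'I_k, weak_colouring blk c).

(* Main.v *)
Require Import Defs.
From mathcomp Require Import all_boot.
From mathcomp Require Import zify.
Set Implicit Arguments. Unset Strict Implicit. Unset Printing Implicit Defensive.

Definition fM (m : 'I_3) (k : 'I_4) : bool := (val k == 0) || (val k == m.+1).
Lemma L1 (a b : 'I_4) (m m' : 'I_3) : a != b -> fM m a = fM m b -> fM m' a = fM m' b -> m = m'.
Proof.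
case: a b m m' => [a Ha] [b Hb] [m Hm] [m' Hm']; rewrite /fM /= -val_eqE /= => Hab.
move=> H1 H2; apply/val_inj => /=.
move: a b m m' Ha Hb Hm Hm' Hab H1 H2.
by do 4!case=> [|[|[|[|?]]]] //.
Qed.
Lemma L2 (a b d : 'I_4) (m : 'I_3) : a != b -> a != d -> b != d -> fM m a = fM m b -> fM m a = fM m d -> False.
Proof.
case: a b d m => [a Ha] [b Hb] [d Hd] [m Hm]; rewrite /fM /= -!val_eqE /=.
move: a b d m Ha Hb Hd Hm.
by do 4!case=> [|[|[|[|?]]]] //.
Qed.
Lemma card_pairs (F : 'I_3 * bool -> bool) : #|[set p | F p]| = \sum_(m < 3) (F (m,true) + F (m,false)).
Proof.
rewrite -sum1_card big_mkcond /=.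
transitivity (\sum_(p : 'I_3 * bool) (F (p.1, p.2) : nat)).
  by apply: eq_bigr => -[m b] _; rewrite inE; case: (F (m,b)).
rewrite -(pair_bigA _ (fun m b => (F (m,b) : nat))).
by apply: eq_bigr => m _; rewrite big_bool.
Qed.

Definition Wb (P B : finType) (blk : B -> {set P}) (c : P -> 'I_4) (u v : P)
  (m : 'I_3) (sg : bool) (b : B) : bool :=
  [&& u \in blk b, v \notin blk b & [forall x in blk b, (x != u) ==> (fM m (c x) == sg)]].
Definition Tb (P B : finType) (blk : B -> {set P}) (c : P -> 'I_4) (u v : P)
  (m : 'I_3) (sg : bool) : bool := [exists b, Wb blk c u v m sg b].
Definition shared (P B : finType) (blk : B -> {set P}) (u v : P) : bool :=
  [exists b, (u \in blk b) && (v \in blk b)].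

Definition HcP (P B : finType) (blk : B -> {set P}) (c : P -> 'I_4) (u v : P) : Prop :=
  forall b x y, x \in blk b -> y \in blk b -> x != y -> x != u -> x != v ->
    y != u -> y != v -> c x != c y.

Lemma W_uniq (P B : finType) (blk : B -> {set P}) (c : P -> 'I_4) (u v : P) m m' sg sg' b :
  sym_config_v3 blk -> HcP blk c u v ->
  Wb blk c u v m sg b -> Wb blk c u v m' sg' b -> m = m' /\ sg = sg'.
Proof.
case=> _ Hb3 _ _ Hc /and3P[Hu Hv /forallP H1] /and3P[_ _ /forallP H2].
have Hc2 : #|blk b :\ u| == 2 by move: (cardsD1 u (blk b)); rewrite Hu Hb3 add1n => -[<-].
case/cards2P: Hc2 => y [z [Hyz HS]].
have Hy : y \in blk b :\ u by rewrite HS !inE eqxx.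
have Hz : z \in blk b :\ u by rewrite HS !inE eqxx orbT.
move: Hy Hz; rewrite !inE => /andP[Hyu Hyb] /andP[Hzu Hzb].
have Hyv : y != v by apply/eqP => E; move: Hv; rewrite -E Hyb.
have Hzv : z != v by apply/eqP => E; move: Hv; rewrite -E Hzb.
have Hcyz := Hc b y z Hyb Hzb Hyz Hyu Hyv Hzu Hzv.
move: (H1 y) (H1 z) (H2 y) (H2 z); rewrite Hyb Hzb Hyu Hzu /= => /eqP a1 /eqP a2 /eqP a3 /eqP a4.
have Em : m = m' by apply: (L1 Hcyz); [rewrite a1 a2 | rewrite a3 a4].
by split => //; rewrite -a1 -a3 Em.
Qed.

Lemma card_Tb (P B : finType) (blk : B -> {set P}) (c : P -> 'I_4) (u v : P) :
  sym_config_v3 blk -> HcP blk c u v ->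
  #|[set p | Tb blk c u v p.1 p.2]| + shared blk u v <= 3.
Proof.
move=> Hconf Hc.
pose h b := odflt (ord0, false) [pick p | Wb blk c u v p.1 p.2 b].
pose Bu := [set b | (u \in blk b) && (v \notin blk b)].
have sub : [set p | Tb blk c u v p.1 p.2] \subset h @: Bu.
  apply/subsetP => -[m sg]; rewrite inE => /existsP[b Hw].
  apply/imsetP; exists b.
    by move: Hw => /and3P[Hu Hv _]; rewrite inE Hu Hv.
  rewrite /h; case: pickP => [[m' sg'] Hw'|Hn] /=.
    by case: (W_uniq Hconf Hc Hw Hw') => /= -> ->.
  by have := Hn (m, sg); rewrite Hw.
have le1 := leq_trans (subset_leq_card sub) (leq_imset_card h Bu).
case: Hconf => _ _ Hx3 _.
rewrite /shared; case: (boolP [exists b, (u \in blk b) && (v \in blk b)]) => [/existsP[b0 /andP[Hu0 Hv0]]|_] /=.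
  have sub2 : Bu \subset [set b | u \in blk b] :\ b0.
    apply/subsetP => b; rewrite !inE => /andP[Hu Hv]; rewrite Hu andbT.
    by apply/eqP => E; move: Hv; rewrite E Hv0.
  have := cardsD1 b0 [set b | u \in blk b]; rewrite Hx3 inE Hu0 add1n.
  move=> A2; have A1 := subset_leq_card sub2; rewrite addn1; apply: leq_ltn_trans le1 _; apply: leq_ltn_trans A1 _; by rewrite A2.
have sub2 : Bu \subset [set b | u \in blk b].
  by apply/subsetP => b; rewrite !inE => /andP[].
by have := subset_leq_card sub2; rewrite Hx3 addn0 => A1; apply: leq_trans le1 A1.
Qed.

Definition gcol (P : finType) (c : P -> 'I_4) (t s : P) (m : 'I_3) (ct cs : bool) (x : P) : bool :=
  if x == t then ct else if x == s then cs else fM m (c x).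

Lemma failing (P B : finType) (blk : B -> {set P}) (c : P -> 'I_4) (t s : P) m ct cs b :
  sym_config_v3 blk -> t != s -> HcP blk c t s ->
  (forall x y, x \in blk b -> y \in blk b -> gcol c t s m ct cs x = gcol c t s m ct cs y) ->
  [|| Tb blk c t s m ct, Tb blk c s t m cs | (ct == cs) && shared blk t s].
Proof.
move=> [_ Hb3 _ _] Hts Hc Hmono.
have gt : gcol c t s m ct cs t = ct by rewrite /gcol eqxx.
have gs : gcol c t s m ct cs s = cs by rewrite /gcol eq_sym (negbTE Hts) eqxx.
have gx : forall x, x != t -> x != s -> gcol c t s m ct cs x = fM m (c x).
  by move=> x H1 H2; rewrite /gcol (negbTE H1) (negbTE H2).
case Ht: (t \in blk b); case Hs: (s \in blk b).
- have := Hmono t s Ht Hs; rewrite gt gs => ->.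
  by rewrite eqxx /shared; apply/orP; right; apply/orP; right; apply/existsP; exists b; rewrite Ht Hs.
- apply/orP; left; apply/existsP; exists b; rewrite /Wb Ht Hs /=.
  apply/forallP => x; apply/implyP => Hx; apply/implyP => Hxt.
  have Hxs : x != s by apply/eqP => E; move: Hs; rewrite -E Hx.
  by rewrite -(gx x Hxt Hxs) (Hmono x t Hx Ht) gt.
- apply/orP; right; apply/orP; left; apply/existsP; exists b; rewrite /Wb Ht Hs /=.
  apply/forallP => x; apply/implyP => Hx; apply/implyP => Hxs.
  have Hxt : x != t by apply/eqP => E; move: Ht; rewrite -E Hx.
  by rewrite -(gx x Hxt Hxs) (Hmono x s Hx Hs) gs.
- exfalso.
  have : 0 < #|blk b| by rewrite Hb3.
  case/card_gt0P => x Hx.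
  have H2 : #|blk b :\ x| == 2 by move: (cardsD1 x (blk b)); rewrite Hx Hb3 add1n => -[<-].
  case/cards2P: H2 => y [z [Hyz HS]].
  have Hy : y \in blk b :\ x by rewrite HS !inE eqxx.
  have Hz : z \in blk b :\ x by rewrite HS !inE eqxx orbT.
  move: Hy Hz; rewrite !inE => /andP[Hyx Hyb] /andP[Hzx Hzb].
  have nT : forall w, w \in blk b -> (w != t) && (w != s).
    by move=> w Hw; apply/andP; split; apply/eqP => E; [move: Ht|move: Hs]; rewrite -E Hw.
  have /andP[Hxt Hxs] := nT x Hx.
  have /andP[Hyt Hys] := nT y Hyb.
  have /andP[Hzt Hzs] := nT z Hzb.
  have Hxy : x != y by rewrite eq_sym.
  have Hxz : x != z by rewrite eq_sym.
  have c1 := Hc b x y Hx Hyb Hxy Hxt Hxs Hyt Hys.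
  have c2 := Hc b x z Hx Hzb Hxz Hxt Hxs Hzt Hzs.
  have c3 := Hc b y z Hyb Hzb Hyz Hyt Hys Hzt Hzs.
  apply: (L2 c1 c2 c3 (m := m)).
    by rewrite -(gx x Hxt Hxs) -(gx y Hyt Hys); apply: Hmono.
  by rewrite -(gx x Hxt Hxs) -(gx z Hzt Hzs); apply: Hmono.
Qed.

Lemma comb (x0 x1 y0 y1 sh : bool) :
  [|| x0, y1 | (false == true) && sh] -> [|| x1, y0 | (true == false) && sh] ->
  [|| x0, y0 | (false == false) && sh] -> [|| x1, y1 | (true == true) && sh] ->
  (x1 + x0 = 2 \/ y1 + y0 = 2 \/ (1 <= x1 + x0 /\ 1 <= y1 + y0 /\ (sh : nat) = 1))%N.
Proof. by case: x0; case: x1; case: y0; case: y1; case: sh; auto. Qed.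

Lemma final_arith (a0 a1 a2 b0 b1 b2 sh : nat) :
  a0 + (a1 + (a2 + 0)) + sh <= 3 -> b0 + (b1 + (b2 + 0)) + sh <= 3 ->
  (a0 = 2 \/ b0 = 2 \/ (1 <= a0 /\ 1 <= b0 /\ sh = 1)) ->
  (a1 = 2 \/ b1 = 2 \/ (1 <= a1 /\ 1 <= b1 /\ sh = 1)) ->
  (a2 = 2 \/ b2 = 2 \/ (1 <= a2 /\ 1 <= b2 /\ sh = 1)) -> False.
Proof. lia. Qed.

Theorem mainTheorem17 (P B : finType) (blk : B -> {set P}) :
  sym_config_v3 blk ->
  strong_chromatic_number blk 5 ->
  (exists (T : {set P}) (c : P -> 'I_4),
      #|T| <= 2 /\
      (forall b x y, x \in blk b -> y \in blk b -> x != y ->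
         x \notin T -> y \notin T -> c x != c y)) ->
  weak_chromatic_number blk 2.
Proof.
move=> Hconf [_ Hno4] [T [c [HT Hc]]].
have Hconf' := Hconf; case: Hconf' => _ Hb3 _ _.
case: (pickP (@predT B)) => [b0 _ | Hnone]; last first.
  exfalso; apply: (Hno4 4 isT); exists (fun _ => ord0) => b; by have := Hnone b.
have Hb0 : 0 < #|blk b0| by rewrite Hb3.
have [t [s [Hts HTs]]] : exists t s, t != s /\ T \subset [set t; s].
  have other : forall t, exists s, (s \in blk b0) && (s != t).
    move=> t; have : 0 < #|blk b0 :\ t|.
      have := cardsD1 t (blk b0); rewrite Hb3; case: (t \in blk b0) => E.
      by move: E; rewrite add1n => -[<-].
    by move: E; rewrite add0n => <-.
    by case/card_gt0P => s; rewrite !inE => /andP[H1 H2]; exists s; rewrite H1 H2.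
  have : #|T| = 0 \/ #|T| = 1 \/ #|T| = 2 by lia.
  case=> [/cards0_eq -> | [/eqP/cards1P[t ->] | /eqP/cards2P[t [s [H ->]]]]].
  - case/card_gt0P: Hb0 => t _; have [s /andP[_ Hs]] := other t.
    by exists t, s; rewrite eq_sym Hs sub0set.
  - have [s /andP[_ Hs]] := other t.
    exists t, s; rewrite eq_sym Hs; split => //.
    by apply/subsetP => x; rewrite !inE => ->.
  - by exists t, s; split.
have nT : forall x, x != t -> x != s -> x \notin T.
  by move=> x H1 H2; apply/negP => /(subsetP HTs); rewrite !inE (negbTE H1) (negbTE H2).
have Hc1 : HcP blk c t s.
  by move=> b x y Hx Hy Hxy H1 H2 H3 H4; apply: Hc Hx Hy Hxy (nT _ H1 H2) (nT _ H3 H4).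
have Hc2 : HcP blk c s t.
  by move=> b x y Hx Hy Hxy H1 H2 H3 H4; apply: Hc1 Hx Hy Hxy H2 H1 H4 H3.
split; last first.
  move=> k Hk [c' Hw]; have [x [y [Hx Hy Hne]]] := Hw b0.
  move: Hne; have := ltn_ord (c' x); have := ltn_ord (c' y).
  case: (c' x) => [i Hi]; case: (c' y) => [j Hj] /= _ _.
  have Eij : i = j.
    have := leq_ltn_trans Hi Hk; have := leq_ltn_trans Hj Hk.
    by case: i {Hi} => [|i] //; case: j {Hj} => [|j].
  subst j; by rewrite (bool_irrelevance Hi Hj) eqxx.
pose good m ct cs := [forall b, [exists x in blk b, [exists y in blk b,
   gcol c t s m ct cs x != gcol c t s m ct cs y]]].
case: (boolP [exists m, [exists ct, [exists cs, good m ct cs]]]).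
  case/existsP => m /existsP[ct /existsP[cs /forallP Hg]].
  exists (fun x => if gcol c t s m ct cs x then ord_max else ord0) => b.
  case/existsP: (Hg b) => x /andP[Hx /existsP[y /andP[Hy Hne]]].
  exists x, y; split => //.
  by move: Hne; case: (gcol c t s m ct cs x); case: (gcol c t s m ct cs y).
move=> Hn.
have fail : forall m ct cs,
    [|| Tb blk c t s m ct, Tb blk c s t m cs | (ct == cs) && shared blk t s].
  move=> m ct cs.
  move: Hn; rewrite negb_exists => /forallP /(_ m); rewrite negb_exists => /forallP /(_ ct).
  rewrite negb_exists => /forallP /(_ cs); rewrite negb_forall => /existsP[b Hb].
  apply: (failing Hconf Hts Hc1 (b := b)) => x y Hx Hy.
  apply/eqP/negPn/negP => Hne; apply: (negP Hb); apply/existsP; exists x; rewrite Hx /=.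
  by apply/existsP; exists y; rewrite Hy.
have per : forall m, let a := Tb blk c t s m true + Tb blk c t s m false in
   let b := Tb blk c s t m true + Tb blk c s t m false in
   (a = 2 \/ b = 2 \/ (1 <= a /\ 1 <= b /\ (shared blk t s : nat) = 1))%N.
  move=> m /=.
  exact: comb (fail m false true) (fail m true false) (fail m false false) (fail m true true).
have cT := card_Tb Hconf Hc1; have cS := card_Tb Hconf Hc2.
have shC : shared blk s t = shared blk t s.
  by apply/existsP/existsP => -[b Hb]; exists b; rewrite andbC.
rewrite shC !card_pairs !big_ord_recl !big_ord0 /= in cT cS.
exfalso; apply: (final_arith cT cS); [exact: per ord0 | exact: per (lift ord0 ord0) | exact: per (lift ord0 (lift ord0 ord0))].
Qed.
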